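(* Consider the algorithm ECCom described in the context, and fix an epoch $i$. If $f_N^{i'}+f_L^{i'}\le 1/4$, then with high probability $f_N^{i}+f_L^{i}\le 1/3$.
   Context: Setting. A dynamic system of IDs with at least $n_0$ good IDs at all times; ''with high probability'' means with probability at least $1-n_0^{-c'}$ for a desired constant $c'$ (relative to a lifetime of $O(n_0^{\gamma})$ events, $\gamma\ge1$ a constant). A committee runs algorithm ECCom: it maintains $\mathcal S_{\mathrm{old}}$, the set of IDs present after the most recent purge (start of the epoch), and $\mathcal S$, the current set of IDs. It uses a hash function $h'$, unknown to the IDs and behaving as a uniformly random function to $[0,1)$, and places an ID $v$ in the sample when $h'(v)\le c\log n_0/|\mathcal S_{\mathrm{old}}|$, where $c>0$ is a sufficiently large constant depending on $\gamma$. The sample set $\mathcal S'_{\mathrm{old}}$ consists of the sampled IDs of $\mathcal S_{\mathrm{old}}$ at the start of the epoch; the current sample set $\mathcal S'$ consists of the sampled IDs currently present (sampled newly joined IDs are added, departed IDs removed). A purge is triggered when $|(\mathcal S'\cup\mathcal S'_{\mathrm{old}})\setminus(\mathcal S'\cap\mathcal S'_{\mathrm{old}})|\ge|\mathcal S'_{\mathrm{old}}|/4$. Notation. For epoch $i$: $f_N^i$ is the fraction (relative to $|\mathcal S_{\mathrm{old}}|$) of IDs that joined during the epoch and remain active, and $f_L^i$ is the fraction of IDs of $\mathcal S_{\mathrm{old}}$ that have left; $f_N^{i'}$ and $f_L^{i'}$ are the corresponding fractions for the sample sets (relative to $|\mathcal S'_{\mathrm{old}}|$, counting sampled new IDs remaining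 in $\mathcal S'$ and IDs of $\mathcal S'_{\mathrm{old}}$ that have left). *)

(* Defs.v *)
From HB Require Import structures.
From mathcomp Require Import all_boot all_order all_algebra.
From mathcomp Require Import reals exp.
Set Implicit Arguments. Unset Strict Implicit. Unset Printing Implicit Defensive.
Import Order.TTheory GRing.Theory Num.Theory.
Local Open Scope ring_scope.

Section ECCom.
Variables (R : realType) (T : finType).

(* Sampling threshold of ECCom: v is sampled iff h'(v) <= c log n0 / |S_old|.
   Since h'(v) is uniform on [0,1), this event has probability min(1, thr). *)
Definition samp_prob (c : R) (n0 : nat) (Sold : {set T}) : R :=
  Num.min 1 (c * ln (n0%:R) / #|Sold|%:R).

(* Law of the random sample set X = {v | h'(v) <= thr}: independent
   inclusions with probability p; Pr[E] = sum over X satisfying E. *)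
Definition sampleP (p : R) (E : pred {set T}) : R :=
  \sum_(X : {set T} | E X) p ^+ #|X| * (1 - p) ^+ (#|T| - #|X|).

Definition fN (Sold S : {set T}) : R := #|S :\: Sold|%:R / #|Sold|%:R.
Definition fL (Sold S : {set T}) : R := #|Sold :\: S|%:R / #|Sold|%:R.

Definition fN' (X Sold S : {set T}) : R := fN (Sold :&: X) (S :&: X).
Definition fL' (X Sold S : {set T}) : R := fL (Sold :&: X) (S :&: X).

Definition purge (X Sold S : {set T}) : bool :=
  #|(S :&: X :|: Sold :&: X) :\: (S :&: X :&: (Sold :&: X))|%:R
    >= #|Sold :&: X|%:R / 4%:R :> R.

Definition bad_epoch (S : nat -> {set T}) (Tend : nat) (X : {set T}) : bool :=
  [exists t : 'I_Tend.+1,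
    [&& [forall s : 'I_Tend.+1, (s < t)%N ==> ~~ purge X (S 0%N) (S s)],
        fN' X (S 0%N) (S t) + fL' X (S 0%N) (S t) <= 1 / 4%:R &
        1 / 3%:R < fN (S 0%N) (S t) + fL (S 0%N) (S t)]].

End ECCom.

(* Main.v *)
Require Import Defs.
From HB Require Import structures.
From mathcomp Require Import all_boot all_order all_algebra.
From mathcomp Require Import reals exp sequences.
From mathcomp Require Import ring lra.
Import Order.TTheory GRing.Theory Num.Theory.
Local Open Scope ring_scope.

Section H.
Variables (R : realType) (T : finType).

Definition wt (p : R) (X : {set T}) : R := p ^+ #|X| * (1 - p) ^+ (#|T| - #|X|).

Lemma prod_if (X : {set T}) (f : T -> R) (g : R) :
  \prod_i (if i \in X then f i else g) = (\prod_(i in X) f i) * g ^+ (#|T| - #|X|).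
Proof.
rewrite (bigID (fun i => i \in X)) /=.
congr (_ * _).
  by apply: eq_bigr => i ->.
rewrite (eq_bigr (fun _ => g)); last by move=> i /negbTE ->.
rewrite prodr_const; congr (_ ^+ _).
rewrite -(cardsC X) addKn.
by apply: eq_card => i; rewrite !inE.
Qed.

Lemma mgf (p r : R) (Y : {set T}) :
  \sum_(X : {set T}) wt p X * r ^+ #|Y :&: X| = (1 - p + p * r) ^+ #|Y|.
Proof.
have E : forall X : {set T}, wt p X * r ^+ #|Y :&: X| =
   \prod_i (if i \in X then p * (if i \in Y then r else 1) else 1 - p).
  move=> X; rewrite prod_if big_split /= prodr_const -big_mkcondr /= prodr_const.
  rewrite /wt; have -> : #|[pred i | (i \in X) && (i \in Y)]| = #|Y :&: X|.
    by apply: eq_card => i; rewrite !inE andbC.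
  ring.
under eq_bigr => X _ do rewrite E.
rewrite -bigA_distr.
rewrite (bigID (fun i => i \in Y)) /=.
rewrite [X in _ * X](eq_bigr (fun _ => 1)); last by move=> i /negbTE ->; ring.
rewrite (eq_bigr (fun _ => 1 - p + p * r)); last by move=> i ->; ring.
by rewrite prodr_const big1_eq mulr1.
Qed.

Lemma wt_ge0 p X : 0 <= p <= 1 -> 0 <= wt p X.
Proof. by case/andP=> p0 p1; rewrite /wt mulr_ge0 // exprn_ge0 // subr_ge0. Qed.

Lemma tail (p r a : R) (Y : {set T}) (E : pred {set T}) :
  0 <= p <= 1 -> 0 <= a -> 0 <= r ->
  (forall X, E X -> 1 <= a * r ^+ #|Y :&: X|) ->
  sampleP p E <= a * (1 - p + p * r) ^+ #|Y|.
Proof.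
move=> hp ha hr hE.
rewrite -mgf mulr_sumr /sampleP [X in _ <= X](bigID E) /=.
rewrite -[X in X <= _]addr0 lerD //; last first.
  by apply: sumr_ge0 => X _; rewrite mulr_ge0 // mulr_ge0 ?wt_ge0 // exprn_ge0.
apply: ler_sum => X EX.
have := hE X EX; have := @wt_ge0 p X hp.
set w := wt p X; set q := r ^+ _ => w0 h.
change (w <= a * (w * q)); rewrite mulrCA -{1}(mulr1 w); exact: ler_wpM2l.
Qed.

Lemma union (I : finType) (p : R) (E : pred {set T}) (F : I -> pred {set T}) :
  0 <= p <= 1 -> (forall X, E X -> exists i, F i X) ->
  sampleP p E <= \sum_i sampleP p (F i).
Proof.
move=> hp hE; rewrite /sampleP.
under [X in _ <= X]eq_bigr do rewrite big_mkcond.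
rewrite exchange_big /= big_mkcond /=.
apply: ler_sum => X _.
case: ifP => EX; last by apply: sumr_ge0 => i _; case: ifP => // _; exact: wt_ge0.
have [i Fi] := hE X EX.
rewrite (bigD1 i) //= Fi lerDl.
by apply: sumr_ge0 => j _; case: ifP => // _; exact: wt_ge0.
Qed.

Lemma pow_exp (x : R) n : 0 <= 1 + x -> (1 + x) ^+ n <= expR (n%:R * x).
Proof.
move=> hx; rewrite expRM_natl; apply: lerXn2r; rewrite ?nnegrE ?expR_ge0 //.
exact: expR_ge1Dx.
Qed.

Lemma ln_le (z : R) : 0 < z -> ln z <= z - 1.
Proof. move=> z0; have := @le_ln1Dx R (z - 1); rewrite addrCA subrr addr0; apply; lra. Qed.

Lemma ln_ge (z : R) : 0 < z -> 1 - z^-1 <= ln z.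
Proof.
move=> z0; have := @ln_le z^-1; rewrite invr_gt0 lnV ?posrE // => /(_ z0); lra.
Qed.

Lemma pow_ln (r : R) n : 0 < r -> r ^+ n = expR (n%:R * ln r).
Proof. by move=> r0; rewrite expRM_natl lnK. Qed.

Lemma tailZ (p : R) (Y : {set T}) (E : pred {set T}) : 0 <= p <= 1 ->
  (forall X, E X -> #|Y :&: X| = 0%N) -> sampleP p E <= expR (- (p * #|Y|%:R)).
Proof.
move=> hp hE; apply: le_trans (@tail p 0 1 Y E hp _ _ _) _ => //.
  by move=> X /hE ->; rewrite expr0 mulr1.
rewrite mul1r mulr0 addr0 -mulNr mulrC; apply: pow_exp.
case/andP: hp => _ ; lra.
Qed.

Lemma tailU (p : R) (Y : {set T}) (E : pred {set T}) : 0 <= p <= 1 ->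
  (forall X, E X -> 7 / 6 * (p * #|Y|%:R) <= #|Y :&: X|%:R) ->
  sampleP p E <= expR (- (p * #|Y|%:R) / 156).
Proof.
move=> hp hE; set mu := p * #|Y|%:R.
have mu0 : 0 <= mu by case/andP: hp => p0 _; rewrite mulr_ge0.
have L0 : 13^-1 <= ln (13 / 12 : R).
  have := @ln_ge (13/12); rewrite invf_div; lra.
apply: le_trans (@tail p (13/12) (expR (- (7/6 * mu * ln (13/12)))) Y E hp _ _ _) _.
- exact: expR_ge0.
- lra.
- move=> X /hE h; have r0 : 0 < 13/12 :> R by lra.
  rewrite (@pow_ln _ _ r0) -expRD -[X in X <= _]expR0 ler_expR.
  have -> : - (7 / 6 * mu * ln (13 / 12)) + #|Y :&: X|%:R * ln (13 / 12) =
     (#|Y :&: X|%:R - 7 / 6 * mu) * ln (13 / 12 : R) by ring.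
  rewrite mulr_ge0 //; last by apply: le_trans L0; lra.
  rewrite subr_ge0; exact: h.
- have -> : 1 - p + p * (13/12) = 1 + p / 12 by lra.
  have h1 : 0 <= 1 + p / 12 by case/andP: hp => p0 _ ; lra.
  apply: le_trans (ler_wpM2l (expR_ge0 _) (@pow_exp _ #|Y| h1)) _.
  rewrite -expRD ler_expR -/mu.
  have -> : #|Y|%:R * (p / 12) = mu / 12 by rewrite /mu; lra.
  nra.
Qed.

Lemma tailL (p : R) (Y : {set T}) (E : pred {set T}) (mu : R) : 0 <= p <= 1 ->
  0 <= mu -> mu <= 3 * (p * #|Y|%:R) ->
  (forall X, E X -> #|Y :&: X|%:R <= 7 / 24 * mu) ->
  sampleP p E <= expR (- mu / 720).
Proof.
move=> hp mu0 hmu hE.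
have r0 : 0 < 15/16 :> R by lra.
have L0 : - 15^-1 <= ln (15 / 16 : R).
  have := @ln_ge (15/16); rewrite invf_div; lra.
have L1 : ln (15 / 16 : R) <= 0 by apply: ln_le0; lra.
apply: le_trans (@tail p (15/16) (expR (- (7/24 * mu * ln (15/16)))) Y E hp _ _ _) _.
- exact: expR_ge0.
- lra.
- move=> X /hE h.
  rewrite (@pow_ln _ _ r0) -expRD -[X in X <= _]expR0 ler_expR.
  have -> : - (7 / 24 * mu * ln (15 / 16)) + #|Y :&: X|%:R * ln (15 / 16) =
     (#|Y :&: X|%:R - 7 / 24 * mu) * ln (15 / 16 : R) by ring.
  by rewrite mulr_le0 // subr_le0.
- have -> : 1 - p + p * (15/16) = 1 + (- p / 16) by lra.
  have h1 : 0 <= 1 + (- p / 16) by case/andP: hp => p0 p1 ; lra.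
  apply: le_trans (ler_wpM2l (expR_ge0 _) (@pow_exp _ #|Y| h1)) _.
  rewrite -expRD ler_expR.
  have -> : #|Y|%:R * (- p / 16) = - (p * #|Y|%:R) / 16 by lra.
  nra.
Qed.

Lemma card_sd (A B : {set T}) :
  #|(A :\: B) :|: (B :\: A)| = (#|A :\: B| + #|B :\: A|)%N.
Proof.
have := cardsUI (A :\: B) (B :\: A).
have -> : (A :\: B) :&: (B :\: A) = set0.
  by apply/setP => v; rewrite !inE; case: (v \in A); case: (v \in B).
by rewrite cards0 addn0.
Qed.

Lemma step (p : R) (S0 S : {set T}) : 0 <= p <= 1 -> (0 < #|S0|)%N ->
  sampleP p [pred X | (fN' R X S0 S + fL' R X S0 S <= 1 / 4%:R) &&
                      (1 / 3%:R < fN R S0 S + fL R S0 S)]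
  <= 3 * expR (- (p * #|S0|%:R) / 720).
Proof.
move=> hp m0.
have p0 : 0 <= p by case/andP: hp.
set mu := p * #|S0|%:R.
have mu0 : 0 <= mu by rewrite mulr_ge0.
have e0 : 0 <= expR (- mu / 720) := expR_ge0 _.
have mR : 0 < #|S0|%:R :> R by rewrite ltr0n.
case: (boolP (1 / 3%:R < fN R S0 S + fL R S0 S)) => hf; last first.
  rewrite /sampleP big_pred0; first by rewrite mulr_ge0.
  by move=> X; apply/negP => /andP [_ h].
set D := (S :\: S0) :|: (S0 :\: S).
have hD : mu <= 3 * (p * #|D|%:R).
  move: hf; rewrite /fN /fL -mulrDl -natrD -card_sd -/D ltr_pdivlMr //.
  rewrite /mu => h; nra.
pose EZ := [pred X : {set T} | #|S0 :&: X| == 0%N].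
pose EU := [pred X : {set T} | 7 / 6 * mu <= #|S0 :&: X|%:R].
pose EL := [pred X : {set T} | #|D :&: X|%:R <= 7 / 24 * mu].
pose F := fun i : 'I_3 => match val i with 0 => EZ | 1 => EU | _ => EL end.
apply: le_trans (@union _ p _ F hp _) _.
  move=> X /andP [h _].
  case: (posnP #|S0 :&: X|) => [hs|hs].
    by exists (@Ordinal 3 0 isT); rewrite /F /= hs.
  have hDX : #|D :&: X| = (#|(S :&: X) :\: (S0 :&: X)| + #|(S0 :&: X) :\: (S :&: X)|)%N.
    rewrite -card_sd; apply: eq_card => v; rewrite !inE.
    by case: (v \in S); case: (v \in S0); case: (v \in X).
  move: h; rewrite /fN' /fN /fL' /fL -mulrDl -natrD -hDX.
  have sR : 0 < #|S0 :&: X|%:R :> R by rewrite ltr0n.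
  rewrite ler_pdivrMr // => h.
  case: (boolP (7 / 6 * mu <= #|S0 :&: X|%:R)) => h2.
    by exists (@Ordinal 3 1 isT).
  exists (@Ordinal 3 2 isT); rewrite /F /=.
  move: h2; rewrite -ltNge => h2; lra.
rewrite !big_ord_recl big_ord0 addr0 /F /=.
have hZ : sampleP p EZ <= expR (- mu / 720).
  apply: le_trans (@tailZ p S0 EZ hp _) _; first by move=> X /eqP.
  rewrite ler_expR -/mu; lra.
have hU : sampleP p EU <= expR (- mu / 720).
  apply: le_trans (@tailU p S0 EU hp _) _; first by move=> X.
  rewrite ler_expR -/mu; lra.
have hL : sampleP p EL <= expR (- mu / 720).
  exact: (@tailL p D EL mu hp mu0 hD).
lra.
Qed.
End H.

Lemma samp1 (R : realType) (T : finType) (S : nat -> {set T}) (Tend : nat) :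
  sampleP (1 : R) (@bad_epoch R T S Tend) <= 0.
Proof.
rewrite /sampleP big1 // => X hX.
have XT : X != setT.
  apply/eqP => XT; move: hX; rewrite XT => /existsP [t /and3P [_ h1 h2]].
  move: h1; rewrite /fN' /fL' !setIT; lra.
have : (#|X| < #|T|)%N by rewrite -cardsT proper_card // properT.
rewrite subrr expr0n -subn_gt0 => /lt0n_neq0 /negbTE ->; by rewrite mulr0.
Qed.

Theorem lemma5 (R : realType) (gamma c' K : R) :
  1 <= gamma -> 0 < c' -> 0 < K ->
  exists c0 : R, forall c : R, c0 <= c ->
  exists N : nat, forall (n0 : nat), (N <= n0)%N ->
  forall (T : finType) (S : nat -> {set T}) (Tend : nat),
    (* lifetime of O(n0^gamma) events *)
    Tend%:R <= K * (n0%:R `^ gamma) ->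
    (* each step is a single join or departure event *)
    (forall t, (t < Tend)%N -> (#|(S t.+1 :\: S t) :|: (S t :\: S t.+1)| <= 1)%N) ->
    (* at least n0 (good) IDs present at all times *)
    (forall t, (t <= Tend)%N -> (n0 <= #|S t|)%N) ->
    sampleP (samp_prob c n0 (S 0%N)) (@bad_epoch R T S Tend)
      <= n0%:R `^ (- c').
Proof.
move=> hg hc hK.
exists (720 * (gamma + c' + 1)) => c hc0.
exists (maxn 2 (Num.Def.trunc (3 * (K + 1))).+1) => n0.
rewrite geq_max => /andP [n02 hn0] T S Tend hT _ hS.
have n0R : 2 <= n0%:R :> R by rewrite (ler_nat R 2 n0).
have n0gt : 3 * (K + 1) < n0%:R.
  apply: lt_le_trans (truncnS_gt _) _; by rewrite ler_nat.
have n0ne : (n0%:R : R) != 0 by apply/eqP => h; rewrite h in n0R; lra.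
have L0 : 0 < ln (n0%:R : R) by apply: ln_gt0; lra.
set L := ln (n0%:R : R).
have L0' : 0 < L := L0.
have hm := hS 0%N (leq0n _).
set m := #|S 0%N| in hm *.
have mR : (n0%:R : R) <= m%:R by rewrite ler_nat.
have m0 : (0 < m)%N by apply: leq_trans hm; apply: leq_trans n02.
have c0 : 0 < c by apply: lt_le_trans hc0; rewrite mulr_gt0 //; lra.
have hpow : forall x, n0%:R `^ x = expR (x * L).
  by move=> x; rewrite /powR (negbTE n0ne).
rewrite hpow.
have hA : 0 <= expR (- c' * L) := expR_ge0 _.
rewrite /samp_prob.
case: (leP 1 (c * L / m%:R)) => hp.
  apply: le_trans (@samp1 R T S Tend) hA.

set p := c * L / m%:R.
have mR0 : 0 < m%:R :> R by rewrite ltr0n.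
have pm : p * m%:R = c * L by rewrite /p divfK // gt_eqF.
have hp01 : 0 <= p <= 1.
  by rewrite (ltW hp) andbT /p divr_ge0 // mulr_ge0 // ltW.
pose F := fun t : 'I_Tend.+1 =>
  [pred X | (fN' R X (S 0%N) (S t) + fL' R X (S 0%N) (S t) <= 1 / 4%:R) &&
            (1 / 3%:R < fN R (S 0%N) (S t) + fL R (S 0%N) (S t))].
apply: le_trans (@union _ _ _ p _ F hp01 _) _.
  by move=> X /existsP [t /and3P [_ h1 h2]]; exists t; rewrite /F /= h1 h2.
have hs : forall t : 'I_Tend.+1, sampleP p (F t) <= 3 * expR (- (p * m%:R) / 720).
  by move=> t; exact: (@step R T p (S 0%N) (S t) hp01 m0).
apply: le_trans (ler_sum _ (fun t _ => hs t)) _.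
rewrite sumr_const card_ord pm.
set E := expR (- (c * L) / 720).
set G := expR (gamma * L).
have G1 : 1 <= G.
  rewrite /G -[X in X <= _]expR0 ler_expR; apply: mulr_ge0; lra.
have hT' : Tend.+1%:R <= (K + 1) * G.
  rewrite -addn1 natrD; move: hT; rewrite hpow -/G => hT; nra.
have hE : E * G * n0%:R <= expR (- c' * L).
  have -> : n0%:R = expR L :> R by rewrite /L lnK // posrE; lra.
  rewrite /E /G -!expRD ler_expR.
  have : 720 * (gamma + c' + 1) * L <= c * L by rewrite ler_pM2r.
  lra.
have E0 : 0 <= E := expR_ge0 _.
have -> : 3 * E *+ Tend.+1 = 3 * E * Tend.+1%:R by rewrite mulr_natr.
have h1 : 3 * E * Tend.+1%:R <= 3 * E * ((K + 1) * G).
  by rewrite ler_wpM2l // mulr_ge0 //; lra.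
have h2 : 3 * (K + 1) * (E * G) <= n0%:R * (E * G).
  by rewrite ler_wpM2r ?mulr_ge0 //; try lra; apply: ltW.
apply: le_trans h1 _.
have -> : 3 * E * ((K + 1) * G) = 3 * (K + 1) * (E * G) by ring.
apply: le_trans h2 _.
by rewrite mulrC.
Qed.
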